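(* If a graph $G$ is a $k$-interval-PCG, then its complement $\overline{G}$ is a $(k+1)$-interval-PCG.
   Context: All trees are unrooted with edges weighted by nonnegative reals; $d_T(u,v)$ is the weight of the path between leaves $u,v$ of $T$. A graph $G$ is a $k$-interval-PCG if there exist a tree $T$ whose leaf set is $V(G)$ and $k$ pairwise disjoint intervals $I_1,\ldots,I_k$ of nonnegative reals such that $\{u,v\}\in E(G)$ iff $d_T(u,v)\in I_i$ for some $i$. The complement $\overline{G}$ has vertex set $V(G)$ and as edges exactly the non-edges of $G$. *)

(* Defs.v *)
From HB Require Import structures.
From mathcomp Require Import all_boot all_order all_algebra.
From mathcomp Require Import reals.
Set Implicit Arguments. Unset Strict Implicit. Unset Printing Implicit Defensive.
Import Order.TTheory GRing.Theory Num.Theory.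
Local Open Scope ring_scope.

Definition has_cycle (N : finType) (t : rel N) : Prop :=
  exists (x : N) (p : seq N),
    [/\ (2 <= size p)%N, uniq (x :: p), path t x p & t (last x p) x].

Definition is_tree (N : finType) (t : rel N) : Prop :=
  [/\ irreflexive t, symmetric t, (forall x y, connect t x y) & ~ has_cycle t].

(* Leaves: nodes of degree at most one (degree exactly one as soon as the tree
   has at least two nodes; a one-node tree has its node as a leaf). *)
Definition is_leaf (N : finType) (t : rel N) (x : N) : bool :=
  (#|[set y | t x y]| <= 1)%N.

Fixpoint walk_weight (R : numDomainType) (N : Type) (w : N -> N -> R)
    (x : N) (p : seq N) : R :=
  match p with
  | [::] => 0
  | y :: p' => w x y + walk_weight w y p'
  end.

(* [tree_dist t w u v r] : r is the weight of a (the, since t is a tree) simple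
   path from u to v in t, i.e. r = d_T(u, v). *)
Definition tree_dist (R : numDomainType) (N : finType) (t : rel N)
    (w : N -> N -> R) (u v : N) (r : R) : Prop :=
  exists p : seq N,
    [/\ path t u p, last u p = v, uniq (u :: p) & r = walk_weight w u p].

Definition is_interval_PCG (R : realType) (k : nat) (V : finType) (E : rel V)
  : Prop :=
  exists (N : finType) (t : rel N) (w : N -> N -> R) (l : V -> N)
         (I : 'I_k -> interval R),
    [/\ is_tree t,
        (forall x y, t x y -> 0 <= w x y /\ w x y = w y x),
        (* the leaf set of the tree is (a copy of) V(G) *)
        injective l /\ (forall x, is_leaf t x <-> exists v, l v = x),
        (forall i r, r \in I i -> 0 <= r) /\
        (forall i j, i != j -> forall r, r \in I i -> r \notin I j) &
        (forall u v, u != v ->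
           (E u v <-> exists r, tree_dist t w (l u) (l v) r /\
                                exists i, r \in I i))].

Definition compl_graph (V : finType) (E : rel V) : rel V :=
  fun u v => (u != v) && ~~ E u v.

(* Main.v *)
Require Import Defs.
From HB Require Import structures.
From mathcomp Require Import all_boot all_order all_algebra.
From mathcomp Require Import reals boolp classical_sets.
Set Implicit Arguments. Unset Strict Implicit. Unset Printing Implicit Defensive.
Import Order.TTheory GRing.Theory Num.Theory.

Local Open Scope ring_scope.
Lemma itv_conv (R : realType) (i : interval R) x y z :
  x \in i -> z \in i -> x <= y -> y <= z -> y \in i.
Proof.
case: i => bl br; rewrite !itv_boundlr => /andP[h1 _] /andP[_ h2] xy yz.
apply/andP; split.
  by apply: (le_trans h1); rewrite leBSide /=.
by apply: le_trans h2; rewrite leBSide /=.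
Qed.

Lemma finmin (R : realType) (P : R -> Prop) (s : seq R) :
  (exists x, x \in s /\ P x) ->
  exists x, [/\ x \in s, P x & forall y, y \in s -> P y -> x <= y].
Proof.
elim: s => [[x []]//|a s IH] Hex.
case: (pselect (exists x, x \in s /\ P x)) => [/IH [m [ms Pm mmin]]|nex].
  case: (pselect (P a)) => Pa.
    case: (leP a m) => am.
      exists a; split => //; first by rewrite inE eqxx.
      move=> y; rewrite inE => /orP[/eqP->//|ys Py].
      by apply: le_trans am (mmin _ ys Py).
    exists m; split => //; first by rewrite inE ms orbT.
    move=> y; rewrite inE => /orP[/eqP->|ys Py]; [by move=> _; apply: ltW|].
    exact: mmin.
  exists m; split => //; first by rewrite inE ms orbT.
  by move=> y; rewrite inE => /orP[/eqP->//|ys Py]; apply: mmin.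
have Pa : P a.
  apply: contra_notP nex => nPa.
  by case: Hex => x [] ; rewrite inE => /orP[/eqP->//|xs Px]; exists x.
exists a; split => //; first by rewrite inE eqxx.
move=> y; rewrite inE => /orP[/eqP->//|ys Py].
by exfalso; apply: nex; exists y.
Qed.


Lemma finmax (R : realType) (P : R -> Prop) (s : seq R) :
  (exists x, x \in s /\ P x) ->
  exists x, [/\ x \in s, P x & forall y, y \in s -> P y -> y <= x].
Proof.
move=> Hex.
have [|m [ms Pm mmin]] := finmin (P := fun x => P (- x)) (s := map -%R s).
  case: Hex => x [xs Px]; exists (- x); rewrite opprK; split => //.
  by apply: map_f.
exists (- m); split.
- by move/mapP: ms => [x xs ->]; rewrite opprK.
- done.
- move=> y ys Py; rewrite -lerN2 opprK; apply: mmin; last by rewrite opprK.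
  exact: map_f.
Qed.

Section Abs.
Variables (R : realType) (k : nat) (I : 'I_k -> interval R).
Hypothesis hdisj : forall i j, i != j -> forall r, r \in I i -> r \notin I j.
Variable S : seq R.
Hypothesis hS : forall s, s \in S -> 0 <= s.

Definition U r : Prop := exists i, r \in I i.
Definition isminb s b := [/\ b \in S, U b, s < b &
   forall b', b' \in S -> U b' -> s < b' -> b <= b'].
Definition nb s := exists b, [/\ b \in S, U b & s < b].
Definition mb s := xget 0 (isminb s).

Lemma mbP s : nb s -> isminb s (mb s).
Proof.
move=> [b [bS Ub sb]]; apply: xgetPex.
have [|m [mS [Um sm] mmin]] := finmin (P := fun b => U b /\ s < b) (s := S).
  by exists b.
by exists m; split => // b' b'S Ub' sb'; apply: mmin.
Qed.

Definition wid (i : 'I_k) : 'I_k.+1 := widen_ord (leqnSn k) i.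
Definition rhoP s (j : 'I_k.+1) := exists i : 'I_k, [/\ j = wid i, nb s & mb s \in I i].
Definition rho s := xget ord_max (rhoP s).

Lemma wid_neq i : wid i != ord_max.
Proof. by rewrite -val_eqE /= neq_ltn ltn_ord. Qed.

Lemma wid_inj : injective wid.
Proof. by move=> i j /(congr1 val) /= /val_inj. Qed.

Lemma rho_nb s i : nb s -> mb s \in I i -> rho s = wid i.
Proof.
move=> ns mi.
have : rhoP s (rho s) by apply: xgetPex; exists (wid i), i.
case=> i' [-> _ mi']; congr wid.
apply/eqP; apply: contraT => ne.
by move: (hdisj ne mi'); rewrite mi.
Qed.

Lemma rho_nnb s : ~ nb s -> rho s = ord_max.
Proof. by move=> nn; apply: xgetPN => j [i [_ ? _]]. Qed.

Lemma rho_max s : rho s != ord_max -> exists i, [/\ nb s, mb s \in I i & rho s = wid i].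
Proof.
case: (pselect (nb s)) => [ns _|nn]; last by rewrite rho_nnb // eqxx.
have [_ [i mi] _ _] := mbP ns.
by exists i; split => //; apply: rho_nb.
Qed.

Lemma nobad lo hi b : lo \in S -> hi \in S -> ~ U lo -> ~ U hi ->
  b \in S -> U b -> lo <= b -> b <= hi -> rho lo = rho hi -> False.
Proof.
move=> loS hiS Ulo Uhi bS Ub lob bhi rr.
have lob' : lo < b by rewrite lt_neqAle lob andbT; apply/eqP => e; apply: Ulo; rewrite e.
have nlo : nb lo by exists b.
have := mbP nlo; set b1 := mb lo => -[b1S [i1 b1i] lob1 b1min].
have r1 := rho_nb nlo b1i.
have [i2 [nhi mhi r2]] : exists i, [/\ nb hi, mb hi \in I i & rho hi = wid i].
  by apply: rho_max; rewrite -rr r1 wid_neq.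
have e : i1 = i2 by apply: wid_inj; rewrite -r1 -r2.
subst i2.
have [_ _ himb _] := mbP nhi.
apply: Uhi; exists i1; apply: itv_conv b1i mhi _ (ltW himb).
by apply: le_trans bhi; apply: b1min.
Qed.

Lemma middle lo m hi : lo \in S -> m \in S -> hi \in S -> ~ U lo -> ~ U m -> ~ U hi ->
  lo <= m -> m <= hi -> rho lo = rho hi -> rho m = rho lo.
Proof.
move=> loS mS hiS Ulo Um Uhi lom mhi rr.
case: (pselect (nb lo)) => [nlo|nn].
  have := mbP nlo; set b1 := mb lo => -[b1S [i b1i] lob1 b1min].
  have hib1 : hi < b1.
    rewrite ltNge; apply/negP => b1hi.
    by apply: (nobad loS hiS Ulo Uhi b1S _ (ltW lob1) b1hi rr); exists i.
  have mb1 : m < b1 by apply: le_lt_trans hib1.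
  have nm : nb m by exists b1; split => //; exists i.
  have [mmS Umm mmm mmmin] := mbP nm.
  have e : mb m = b1.
    apply/eqP; rewrite eq_le; apply/andP; split.
      by apply: mmmin => //; exists i.
    by apply: b1min => //; apply: le_lt_trans mmm.
  by rewrite (rho_nb nlo b1i) (rho_nb (i := i) nm) // e.
rewrite (rho_nnb nn) rho_nnb // => [[b [bS Ub mb]]].
by apply: nn; exists b; split => //; apply: le_lt_trans mb.
Qed.

Definition goodj j s := [/\ s \in S, ~ U s & rho s = j].
Definition exj j := exists s, goodj j s.
Definition loj j := xget 0 (fun s => goodj j s /\ forall s', goodj j s' -> s <= s').
Definition hij j := xget 0 (fun s => goodj j s /\ forall s', goodj j s' -> s' <= s).
Definition J j : interval R :=
  if pselect (exj j) then `[loj j, hij j] else `]0, 0[.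

Lemma lojP j : exj j -> goodj j (loj j) /\ forall s', goodj j s' -> loj j <= s'.
Proof.
move=> [s gs]; apply: (@xgetPex _ 0 (fun s => goodj j s /\ forall s', goodj j s' -> s <= s')).
have [|m [mS gm mmin]] := finmin (P := goodj j) (s := S).
  by exists s; case: gs.
by exists m; split => // s' gs'; apply: mmin => //; case: gs'.
Qed.

Lemma hijP j : exj j -> goodj j (hij j) /\ forall s', goodj j s' -> s' <= hij j.
Proof.
move=> [s gs]; apply: (@xgetPex _ 0 (fun s => goodj j s /\ forall s', goodj j s' -> s' <= s)).
have [|m [mS gm mmin]] := finmax (P := goodj j) (s := S).
  by exists s; case: gs.
by exists m; split => // s' gs'; apply: mmin => //; case: gs'.
Qed.

Lemma J_nonneg j r : r \in J j -> 0 <= r.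
Proof.
rewrite /J; destruct (pselect (exj j)) as [ej|nej]; last by rewrite in_itv /= => /andP[h _]; exact: ltW h.
have [[loS _ _] _] := lojP ej.
rewrite in_itv /= => /andP[lr _]; exact: le_trans (hS loS) lr.
Qed.

Lemma J_in j r : r \in J j -> exj j /\ loj j <= r <= hij j.
Proof.
rewrite /J; destruct (pselect (exj j)) as [ej|nej]; last first.
  by rewrite in_itv /= => /andP[/lt_trans h /h]; rewrite ltxx.
by rewrite in_itv /=.
Qed.

Lemma aux j j' : exj j -> exj j' -> loj j <= loj j' -> loj j' <= hij j -> j = j'.
Proof.
move=> ej ej' h1 h2.
have [[l1S l1U l1r] _] := lojP ej.
have [[l2S l2U l2r] _] := lojP ej'.
have [[h1S h1U h1r] _] := hijP ej.
have := middle l1S l2S h1S l1U l2U h1U h1 h2.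
by rewrite l1r l2r h1r => /(_ erefl).
Qed.

Lemma J_disj j j' : j != j' -> forall r, r \in J j -> r \notin J j'.
Proof.
move=> ne r /J_in [ej /andP[l1 h1]]; apply/negP => /J_in [ej' /andP[l2 h2]].
case: (leP (loj j) (loj j')) => c.
  by move/eqP: ne; apply; apply: aux => //; apply: le_trans h1.
move/eqP: ne; apply; symmetry; apply: aux => //; first exact: ltW.
by apply: le_trans h2.
Qed.

Lemma J_spec s : s \in S -> (~ U s <-> exists j, s \in J j).
Proof.
move=> sS; split.
  move=> Us; exists (rho s).
  have ej : exj (rho s) by exists s.
  rewrite /J; destruct (pselect (exj (rho s))) as [ej2|nej] => //; rewrite in_itv /=.
  apply/andP; split; first by apply: (lojP ej).2.
  by apply: (hijP ej).2.
move=> [j /J_in [ej /andP[l1 h1]]] Us.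
have [[l1S l1U l1r] _] := lojP ej.
have [[h1S h1U h1r] _] := hijP ej.
by apply: (nobad l1S h1S l1U h1U sS Us l1 h1); rewrite l1r h1r.
Qed.

End Abs.

Lemma complement_itv (R : realType) k (I : 'I_k -> interval R) :
  (forall i j, i != j -> forall r, r \in I i -> r \notin I j) ->
  forall S : seq R, (forall s, s \in S -> 0 <= s) ->
  exists J : 'I_k.+1 -> interval R,
    [/\ (forall j r, r \in J j -> 0 <= r),
        (forall i j, i != j -> forall r, r \in J i -> r \notin J j) &
        (forall s, s \in S -> (~ (exists i, s \in I i) <-> exists j, s \in J j))].
Proof.
move=> hd S hS; exists (J I S); split.
- by move=> j r; apply: J_nonneg.
- exact: J_disj.
- exact: J_spec.
Qed.
Local Close Scope ring_scope.
Lemma split_first (T : eqType) (q p : seq T) : has (mem q) p ->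
  exists p1 z p2, [/\ p = p1 ++ z :: p2, z \in q & ~~ has (mem q) p1].
Proof.
elim: p => [//|a p IH] /=.
case aq: (a \in q) => /= h.
  by exists [::], a, p.
have [p1 [z [p2 [-> zq np1]]]] := IH h.
by exists (a :: p1), z, p2; split => //=; rewrite aq.
Qed.

Lemma cyc (N : finType) (t : rel N) : symmetric t ->
  forall a p q, path t a p -> path t a q -> uniq (a :: p) -> uniq (a :: q) ->
  last a p = last a q -> p != [::] -> q != [::] -> head a p != head a q ->
  has_cycle t.
Proof.
move=> st a p q hp hq up uq el np nq nh.
have : has (mem q) p.
  apply/hasP; exists (last a p).
    by case: p np {hp up el nh} => // x p' _ /=; apply: mem_last.
  by rewrite el; case: q nq {hq uq el nh} => // y q' _ /=; apply: mem_last.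
move=> /split_first [p1 [z [p2 [ep zq np1]]]]; subst p.
case/splitPr: zq hq uq el nq nh np1 => q1 q2 hq uq el nq nh np1.
exists a, (p1 ++ z :: rev q1).
move: hp hq; rewrite !cat_path /= => /and3P[hp1 hz _] /and3P[hq1 hz' _].
have hrev : path t z (rcons (rev q1) a).
  have := rev_path t a (rcons q1 z).
  rewrite last_rcons belast_rcons rev_cons => ->.
  rewrite (eq_path (e' := t)); last by move=> x y /=; rewrite st.
  by rewrite rcons_path hq1.
move: hrev; rewrite rcons_path => /andP[hr1 hr2].
split.
- rewrite size_cat /= size_rev.
  clear np nq el; case: p1 nh {hp1 hz np1 up} => [|x p1] /=; case: q1 {hq1 hz' hr1 hr2 uq} => [|y q1] //=;
  by rewrite ?eqxx //= => _; rewrite ?addnS ?addn0.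
- move: up uq; rewrite /= !mem_cat !cat_uniq /= !inE !mem_rev rev_uniq !negb_or.
  rewrite has_rev.
  move: np1; rewrite has_sym has_cat /= negb_or => /andP[-> /norP[_ _]].
  case/and5P => /and3P[-> -> _] -> /andP[-> _] _ _.
  by case/and5P => /and3P[-> _ _] -> /andP[-> _] _ _.
- by rewrite hp1 hz hr1.
- by rewrite last_cat /=.
Qed.

Lemma path_uniq (N : finType) (t : rel N) : symmetric t -> ~ has_cycle t ->
  forall a p q, path t a p -> path t a q -> uniq (a :: p) -> uniq (a :: q) ->
  last a p = last a q -> p = q.
Proof.
move=> st nc a p; elim: p a => [|x p IH] a q hp hq up uq el.
  case: q hq uq el => // y q _ /= /andP[aq _] ea.
  by move: aq; rewrite ea mem_last.
case: q hq uq el => [|y q] hq uq el.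
  by move: up el => /= /andP[ap _] ea; move: ap; rewrite -ea mem_last.
case: (eqVneq x y) => [exy|nxy].
  subst y; congr cons; apply: (IH x).
  - by case/andP: hp.
  - by case/andP: hq.
  - by case/andP: up.
  - by case/andP: uq.
  - exact: el.
exfalso; apply: nc; apply: (cyc st hp hq up uq el) => //.
Qed.

Lemma tree_dist_uniq (R : numDomainType) (N : finType) (t : rel N) w a b r1 r2 :
  is_tree t -> tree_dist t w a b r1 -> tree_dist (R := R) t w a b r2 -> r1 = r2.
Proof.
move=> [_ st _ nc] [p [hp lp up ->]] [q [hq lq uq ->]].
by rewrite (path_uniq st nc hp hq up uq) // lp lq.
Qed.

Lemma tree_path_ex (N : finType) (t : rel N) a b : is_tree t ->
  exists p, path t a p /\ last a p = b /\ uniq (a :: p).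
Proof.
move=> [_ _ con _]; have /connectP [p hp ->] := con a b.
by case: (shortenP hp) => p' hp' up' _; exists p'.
Qed.

Local Open Scope ring_scope.

Lemma walk_nonneg (R : numDomainType) (N : finType) (t : rel N) (w : N -> N -> R) :
  (forall x y, t x y -> 0 <= w x y /\ w x y = w y x) ->
  forall a p, path t a p -> 0 <= walk_weight w a p.
Proof.
move=> hw a p; elim: p a => [|y p IH] a /=; first by rewrite lexx.
case/andP => hay hp; apply: addr_ge0; [exact: (hw _ _ hay).1 | exact: IH].
Qed.

Theorem lemma3 (R : realType) (k : nat) (V : finType) (E : rel V) :
  irreflexive E -> symmetric E ->
  is_interval_PCG R k E -> is_interval_PCG R k.+1 (compl_graph E).
Proof.
move=> _ _ [N [t [w [l [I [tr hw [linj lleaf] [Ipos Idisj] Hedge]]]]]].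
pose dd (a b : N) : R := walk_weight w a
  (xget [::] (fun p => path t a p /\ last a p = b /\ uniq (a :: p))).
have ddP : forall a b, tree_dist t w a b (dd a b).
  move=> a b.
  have [hp [lp up]] : (fun p => path t a p /\ last a p = b /\ uniq (a :: p))
     (xget [::] (fun p => path t a p /\ last a p = b /\ uniq (a :: p))).
    by apply: (@xgetPex _ [::] (fun p => path t a p /\ last a p = b /\ uniq (a :: p))); apply: tree_path_ex.
  by exists (xget [::] (fun p => path t a p /\ last a p = b /\ uniq (a :: p))).
pose S := [seq dd x y | x <- enum N, y <- enum N].
have hS : forall s, s \in S -> 0 <= s.
  move=> s /allpairsP [[x y] [_ _ ->]] /=.
  by have [p [hp _ _ ->]] := ddP x y; apply: (walk_nonneg hw).
have ddS : forall a b, dd a b \in S.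
  by move=> a b; apply/allpairsP; exists (a, b); rewrite !mem_enum.
have [J [Jpos Jdisj Jspec]] := complement_itv Idisj hS.
exists N, t, w, l, J; split => //.
move=> u v nuv; rewrite /compl_graph nuv /=; split.
  move=> nE; exists (dd (l u) (l v)); split; first exact: ddP.
  apply/(Jspec _ (ddS _ _)) => -[i ri].
  move/negP: nE; apply; apply/Hedge => //.
  by exists (dd (l u) (l v)); split; [exact: ddP | exists i].
move=> [r [hr [j rj]]]; apply/negP => Ee.
have [r' [hr' [i ri']]] := (Hedge u v nuv).1 Ee.
have e1 := tree_dist_uniq tr hr (ddP (l u) (l v)).
have e2 := tree_dist_uniq tr hr' (ddP (l u) (l v)).
have := (Jspec _ (ddS (l u) (l v))).2; rewrite -e1 => /(_ (ex_intro _ j rj)).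
by apply; exists i; rewrite e1 -e2.
Qed.
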